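(* Let $\alpha_i,\beta_i,\gamma_i,\delta_i\in(0,\pi)$, $i=1,\dots,4$. Replace, for all $i=1,\dots,4$, the numbers $\alpha_i,\beta_i,\gamma_i,\delta_i$ by $\pi-\alpha_i,\pi-\beta_i,\pi-\gamma_i,\pi-\delta_i$. This replacement preserves the values $M_i,r_i,s_i,f_i$ (whenever defined), and preserves each of the following conditions: (E) $\alpha_i\pm\beta_i\pm\gamma_i\pm\delta_i\not\equiv0\pmod{2\pi}$ for all sign choices; (C1) $M_1=M_2=M_3=M_4$; (C2) $r_1=r_2$, $s_1=s_4$, $r_3=r_4$, $s_2=s_3$; (C3) $t_1+e_1t_2+e_2t_3+e_3t_4\in\Lambda$ for some $e_1,e_2,e_3\in\{\pm1\}$.
   Context: $\sigma_i=(\alpha_i+\beta_i+\gamma_i+\delta_i)/2$, $\overline{\alpha}_i=\sigma_i-\alpha_i$, etc.; $a_i=\sin\alpha_i/\sin\overline{\alpha}_i$, $b_i=\sin\beta_i/\sin\overline{\beta}_i$, $c_i=\sin\gamma_i/\sin\overline{\gamma}_i$, $d_i=\sin\delta_i/\sin\overline{\delta}_i$, $M_i=a_ib_ic_id_i$, $r_i=a_id_i$, $s_i=c_id_i$, $f_i=a_ic_i$. When $M:=M_1=\dots=M_4$: $k=\sqrt{1-M}$ if $M<1$, $k=\sqrt{1-M^{-1}}$ if $M>1$; $k'=\sqrt{1-k^2}$; $K=\int_0^1\frac{dx}{\sqrt{(1-x^2)(1-k^2x^2)}}$, $K'=\int_0^1\frac{dx}{\sqrt{(1-x^2)(1-k'^2x^2)}}$;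 $\Lambda=\{4Km+2\mathbf{i}K'n\}_{m,n\in\mathbb{Z}}$ if $M<1$, $\Lambda=\{4Km+(2K+2\mathbf{i}K')n\}_{m,n\in\mathbb{Z}}$ if $M>1$; $p_i=\sqrt{r_i-1}$, $q_i=\sqrt{s_i-1}$, each in $\mathbb{R}_{>0}\cup\mathbf{i}\mathbb{R}_{>0}$; $t_i$ is the complex number with $\operatorname{dn}(t_i,k)=\sqrt{f_i}$ if $M<1$, $=1/\sqrt{f_i}$ if $M>1$, on the open segment: if $\sigma_i<\pi$: $(0,\mathbf{i}K')$ when $p_iq_i>0$, $(K,K+\mathbf{i}K')$ when $p_iq_i\in\mathbf{i}\mathbb{R}_{>0}$, $(2K,2K+\mathbf{i}K')$ when $p_iq_i<0$; if $\sigma_i>\pi$: respectively $(2K,2K+\mathbf{i}K')$, $(3K,3K+\mathbf{i}K')$, $(0,\mathbf{i}K')$. *)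

(* Defs.v *)
From Stdlib Require Import Reals ZArith.
From Coquelicot Require Import Coquelicot.
Open Scope R_scope.

Record quad := mkQuad { qa : R; qb : R; qc : R; qd : R }.

Definition angles_ok (Q : quad) : Prop :=
  0 < qa Q < PI /\ 0 < qb Q < PI /\ 0 < qc Q < PI /\ 0 < qd Q < PI.

Definition flipQ (Q : quad) : quad :=
  mkQuad (PI - qa Q) (PI - qb Q) (PI - qc Q) (PI - qd Q).

Definition sigma (Q : quad) : R := (qa Q + qb Q + qc Q + qd Q) / 2.

Definition coef (x s : R) : R := sin x / sin (s - x).
Definition ca (Q : quad) := coef (qa Q) (sigma Q).
Definition cb (Q : quad) := coef (qb Q) (sigma Q).
Definition cc (Q : quad) := coef (qc Q) (sigma Q).
Definition cd (Q : quad) := coef (qd Q) (sigma Q).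

Definition Mq (Q : quad) := ca Q * cb Q * cc Q * cd Q.
Definition rq (Q : quad) := ca Q * cd Q.
Definition sq (Q : quad) := cc Q * cd Q.
Definition fq (Q : quad) := ca Q * cc Q.

Definition values_preserved (Q : quad) : Prop :=
  Mq (flipQ Q) = Mq Q /\ rq (flipQ Q) = rq Q /\
  sq (flipQ Q) = sq Q /\ fq (flipQ Q) = fq Q.

Definition is_sign (e : R) : Prop := e = 1 \/ e = -1.

Definition condE_one (Q : quad) : Prop :=
  forall s1 s2 s3 : R, is_sign s1 -> is_sign s2 -> is_sign s3 ->
  forall m : Z, qa Q + s1 * qb Q + s2 * qc Q + s3 * qd Q <> 2 * PI * IZR m.

Definition condE (Q1 Q2 Q3 Q4 : quad) : Prop :=
  condE_one Q1 /\ condE_one Q2 /\ condE_one Q3 /\ condE_one Q4.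

Definition condC1 (Q1 Q2 Q3 Q4 : quad) : Prop :=
  Mq Q1 = Mq Q2 /\ Mq Q2 = Mq Q3 /\ Mq Q3 = Mq Q4.

Definition condC2 (Q1 Q2 Q3 Q4 : quad) : Prop :=
  rq Q1 = rq Q2 /\ sq Q1 = sq Q4 /\ rq Q3 = rq Q4 /\ sq Q2 = sq Q3.

(* square root of a real number, taken in R_{>0} \cup i R_{>0} (0 for x = 0) *)
Definition csqrtR (x : R) : C :=
  if Rlt_dec 0 x then (sqrt x, 0) else (0, sqrt (- x)).

Definition kmod (M : R) : R := if Rlt_dec M 1 then sqrt (1 - M) else sqrt (1 - / M).

Definition is_ellK (k K : R) : Prop :=
  is_RInt_gen (fun x => / sqrt ((1 - x ^ 2) * (1 - k ^ 2 * x ^ 2)))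
    (at_point 0) (at_left 1) K.

(* Jacobi theta functions theta_3, theta_4 (DLMF 20.2.3-4) with real nome q,
   at the complex point z = x + i y, using
   cos (2n z) = cos (2nx) cosh (2ny) - i sin (2nx) sinh (2ny). *)
Definition theta3 (q : R) (z : C) : C :=
  (1 + 2 * Series (fun n => q ^ ((S n) * (S n)) * cos (2 * INR (S n) * fst z)
                               * cosh (2 * INR (S n) * snd z)),
   - (2 * Series (fun n => q ^ ((S n) * (S n)) * sin (2 * INR (S n) * fst z)
                               * sinh (2 * INR (S n) * snd z)))).

Definition theta4 (q : R) (z : C) : C :=
  (1 + 2 * Series (fun n => (-1) ^ (S n) * q ^ ((S n) * (S n))
                               * cos (2 * INR (S n) * fst z)
                               * cosh (2 * INR (S n) * snd z)),
   - (2 * Series (fun n => (-1) ^ (S n) * q ^ ((S n) * (S n))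
                               * sin (2 * INR (S n) * fst z)
                               * sinh (2 * INR (S n) * snd z)))).

(* Jacobi dn(u, k) for complex u, via theta functions (DLMF 22.2.6):
   dn(u,k) = sqrt(k') theta3(zeta)/theta4(zeta), zeta = pi u / (2K),
   nome q = exp(-pi K'/K), where K = K(k), K' = K(k'). *)
Definition jdn (k K K' : R) (u : C) : C :=
  let k' := sqrt (1 - k ^ 2) in
  let q := exp (- PI * K' / K) in
  let zeta := Cmult (RtoC (PI / (2 * K))) u in
  Cmult (RtoC (sqrt k')) (Cdiv (theta3 q zeta) (theta4 q zeta)).

(* the real part a of the open vertical segment (a, a + i K') where t_i lives *)
Definition seg_base (Q : quad) (K a : R) : Prop :=
  let pq := Cmult (csqrtR (rq Q - 1)) (csqrtR (sq Q - 1)) in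
  let pos := Im pq = 0 /\ 0 < Re pq in
  let imag := Re pq = 0 /\ 0 < Im pq in
  let neg := Im pq = 0 /\ Re pq < 0 in
  (sigma Q < PI /\
     ((pos /\ a = 0) \/ (imag /\ a = K) \/ (neg /\ a = 2 * K))) \/
  (PI < sigma Q /\
     ((pos /\ a = 2 * K) \/ (imag /\ a = 3 * K) \/ (neg /\ a = 0))).

Definition t_prop (M K K' : R) (Q : quad) (t : C) : Prop :=
  (exists a, seg_base Q K a /\ Re t = a) /\ 0 < Im t < K' /\
  jdn (kmod M) K K' t =
    (if Rlt_dec M 1 then csqrtR (fq Q) else Cinv (csqrtR (fq Q))).

Definition is_t (M K K' : R) (Q : quad) (t : C) : Prop :=
  t_prop M K K' Q t /\ forall t', t_prop M K K' Q t' -> t' = t.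

Definition in_Lambda (M K K' : R) (z : C) : Prop :=
  exists m n : Z,
    if Rlt_dec M 1 then z = (4 * K * IZR m, 2 * K' * IZR n)
    else z = (4 * K * IZR m + 2 * K * IZR n, 2 * K' * IZR n).

Definition condC3 (Q1 Q2 Q3 Q4 : quad) : Prop :=
  let M := Mq Q1 in
  0 < M /\ M <> 1 /\
  let k := kmod M in
  let k' := sqrt (1 - k ^ 2) in
  exists K K' : R, is_ellK k K /\ is_ellK k' K' /\
  exists t1 t2 t3 t4 : C,
    is_t M K K' Q1 t1 /\ is_t M K K' Q2 t2 /\
    is_t M K K' Q3 t3 /\ is_t M K K' Q4 t4 /\
  exists e1 e2 e3 : R, is_sign e1 /\ is_sign e2 /\ is_sign e3 /\
    in_Lambda M K K'
      (Cplus (Cplus (Cplus t1 (Cmult (RtoC e1) t2)) (Cmult (RtoC e2) t3))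
             (Cmult (RtoC e3) t4)).

(* Main.v *)
Require Import Defs.
From Stdlib Require Import Reals.
From Coquelicot Require Import Coquelicot.
From Stdlib Require Import Lra ZArith.
Open Scope R_scope.

Lemma flip_invol Q : flipQ (flipQ Q) = Q.
Proof. destruct Q; unfold flipQ; simpl; f_equal; ring. Qed.

Lemma sigma_flip Q : Defs.sigma (flipQ Q) = 2 * PI - Defs.sigma Q.
Proof. destruct Q; unfold Defs.sigma, flipQ; simpl; field. Qed.

Lemma coef_flip x s : coef (PI - x) (2 * PI - s) = coef x s.
Proof.
  unfold coef. rewrite sin_PI_x.
  replace (2 * PI - s - (PI - x)) with (PI - (s - x)) by ring.
  rewrite sin_PI_x. reflexivity.
Qed.

Lemma ca_flip Q : ca (flipQ Q) = ca Q.
Proof. unfold ca. rewrite sigma_flip. simpl. apply coef_flip. Qed.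
Lemma cb_flip Q : cb (flipQ Q) = cb Q.
Proof. unfold cb. rewrite sigma_flip. simpl. apply coef_flip. Qed.
Lemma cc_flip Q : cc (flipQ Q) = cc Q.
Proof. unfold cc. rewrite sigma_flip. simpl. apply coef_flip. Qed.
Lemma cd_flip Q : cd (flipQ Q) = cd Q.
Proof. unfold cd. rewrite sigma_flip. simpl. apply coef_flip. Qed.

Lemma Mq_flip Q : Mq (flipQ Q) = Mq Q.
Proof. unfold Mq. rewrite ca_flip, cb_flip, cc_flip, cd_flip. reflexivity. Qed.
Lemma rq_flip Q : rq (flipQ Q) = rq Q.
Proof. unfold rq. rewrite ca_flip, cd_flip. reflexivity. Qed.
Lemma sq_flip Q : sq (flipQ Q) = sq Q.
Proof. unfold sq. rewrite cc_flip, cd_flip. reflexivity. Qed.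
Lemma fq_flip Q : fq (flipQ Q) = fq Q.
Proof. unfold fq. rewrite ca_flip, cc_flip. reflexivity. Qed.

Lemma vp Q : values_preserved Q.
Proof.
  unfold values_preserved. rewrite Mq_flip, rq_flip, sq_flip, fq_flip. tauto.
Qed.

Lemma sign_Z s : is_sign s -> exists z : Z, s = 2 * IZR z - 1.
Proof.
  intros [-> | ->]; [exists 1%Z | exists 0%Z]; simpl; lra.
Qed.

Lemma condE_one_flip Q : condE_one Q -> condE_one (flipQ Q).
Proof.
  unfold condE_one. intros H s1 s2 s3 h1 h2 h3 m Heq. simpl in Heq.
  destruct (sign_Z _ h1) as [z1 E1].
  destruct (sign_Z _ h2) as [z2 E2].
  destruct (sign_Z _ h3) as [z3 E3].
  apply (H s1 s2 s3 h1 h2 h3 (z1 + z2 + z3 - 1 - m)%Z).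
  rewrite !minus_IZR, !plus_IZR.
  assert (Hid : qa Q + s1 * qb Q + s2 * qc Q + s3 * qd Q =
     PI * (1 + s1 + s2 + s3) -
     (PI - qa Q + s1 * (PI - qb Q) + s2 * (PI - qc Q) + s3 * (PI - qd Q))) by ring.
  rewrite Hid, Heq.
  assert (HS : 1 + s1 + s2 + s3 = 2 * (IZR z1 + IZR z2 + IZR z3 - 1)) by lra.
  rewrite HS. simpl. ring.
Qed.

Lemma condE_one_iff Q : condE_one Q <-> condE_one (flipQ Q).
Proof.
  split; [apply condE_one_flip|].
  intros H. rewrite <- (flip_invol Q). apply condE_one_flip, H.
Qed.

Definition dok (d : R) := d = 0 \/ d = PI \/ d = - PI.

Lemma cos_shift n x d : dok d -> cos (2 * INR n * (x + d)) = cos (2 * INR n * x).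
Proof.
  intros [-> | [-> | ->]].
  - f_equal; ring.
  - replace (2 * INR n * (x + PI)) with (2 * INR n * x + 2 * INR n * PI) by ring.
    apply cos_period.
  - replace (2 * INR n * x) with ((2 * INR n * (x + - PI)) + 2 * INR n * PI) by ring.
    rewrite cos_period. reflexivity.
Qed.

Lemma sin_shift n x d : dok d -> sin (2 * INR n * (x + d)) = sin (2 * INR n * x).
Proof.
  intros [-> | [-> | ->]].
  - f_equal; ring.
  - replace (2 * INR n * (x + PI)) with (2 * INR n * x + 2 * INR n * PI) by ring.
    apply sin_period.
  - replace (2 * INR n * x) with ((2 * INR n * (x + - PI)) + 2 * INR n * PI) by ring.
    rewrite sin_period. reflexivity.
Qed.

Lemma theta3_shift q x y d : dok d -> theta3 q (x + d, y) = theta3 q (x, y).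
Proof.
  intros Hd. unfold theta3; simpl fst; simpl snd. f_equal.
  - f_equal. f_equal. apply Series_ext. intros n. rewrite (cos_shift _ _ _ Hd). reflexivity.
  - f_equal. f_equal. apply Series_ext. intros n. rewrite (sin_shift _ _ _ Hd). reflexivity.
Qed.

Lemma theta4_shift q x y d : dok d -> theta4 q (x + d, y) = theta4 q (x, y).
Proof.
  intros Hd. unfold theta4; simpl fst; simpl snd. f_equal.
  - f_equal. f_equal. apply Series_ext. intros n. rewrite (cos_shift _ _ _ Hd). reflexivity.
  - f_equal. f_equal. apply Series_ext. intros n. rewrite (sin_shift _ _ _ Hd). reflexivity.
Qed.

Lemma jdn_shift k K K' t e : is_sign e ->
  jdn k K K' (Cplus t (RtoC (2 * K * e))) = jdn k K K' t.
Proof.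
  intros He. unfold jdn.
  destruct t as [x y].
  assert (Hd : exists d, dok d /\
     Cmult (RtoC (PI / (2 * K))) (Cplus (x, y) (RtoC (2 * K * e))) =
     (fst (Cmult (RtoC (PI / (2 * K))) (x, y)) + d,
      snd (Cmult (RtoC (PI / (2 * K))) (x, y)))).
  { destruct (Req_dec K 0) as [HK | HK].
    - exists 0. split; [left; reflexivity|].
      subst K. apply injective_projections; simpl; ring.
    - exists (PI * e). split.
      + destruct He as [-> | ->]; unfold dok; [right; left | right; right]; ring.
      + apply injective_projections; simpl; field; exact HK. }
  destruct Hd as [d [Hd Heq]]. rewrite Heq.
  rewrite (theta3_shift _ _ _ _ Hd), (theta4_shift _ _ _ _ Hd).
  reflexivity.
Qed.

Lemma seg_flip Q K a : seg_base Q K a ->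
  exists e, is_sign e /\ seg_base (flipQ Q) K (a + 2 * K * e).
Proof.
  unfold seg_base. rewrite rq_flip, sq_flip, sigma_flip.
  set (pq := Cmult (csqrtR (rq Q - 1)) (csqrtR (sq Q - 1))).
  intros [[Hs [[Hp Ha] | [[Hp Ha] | [Hp Ha]]]] | [Hs [[Hp Ha] | [[Hp Ha] | [Hp Ha]]]]].
  - exists 1. split; [left; reflexivity|]. right. split; [lra|]. left. split; [exact Hp|lra].
  - exists 1. split; [left; reflexivity|]. right. split; [lra|]. right; left. split; [exact Hp|lra].
  - exists (-1). split; [right; reflexivity|]. right. split; [lra|]. right; right. split; [exact Hp|lra].
  - exists (-1). split; [right; reflexivity|]. left. split; [lra|]. left. split; [exact Hp|lra].
  - exists (-1). split; [right; reflexivity|]. left. split; [lra|]. right; left. split; [exact Hp|lra].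
  - exists 1. split; [left; reflexivity|]. left. split; [lra|]. right; right. split; [exact Hp|lra].
Qed.

Lemma seg_fun Q K a1 a2 : seg_base Q K a1 -> seg_base Q K a2 -> a1 = a2.
Proof.
  unfold seg_base.
  set (pq := Cmult (csqrtR (rq Q - 1)) (csqrtR (sq Q - 1))).
  intros H1 H2.
  destruct H1 as [[Hs [[Hp Ha] | [[Hp Ha] | [Hp Ha]]]] | [Hs [[Hp Ha] | [[Hp Ha] | [Hp Ha]]]]];
  destruct H2 as [[Hs' [[Hp' Ha'] | [[Hp' Ha'] | [Hp' Ha']]]] | [Hs' [[Hp' Ha'] | [[Hp' Ha'] | [Hp' Ha']]]]];
  lra.
Qed.

Lemma t_shift M K K' Q t : t_prop M K K' Q t ->
  exists e, is_sign e /\ t_prop M K K' (flipQ Q) (Cplus t (RtoC (2 * K * e))).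
Proof.
  intros [[a [Hs Ha]] [Him Hj]].
  destruct (seg_flip _ _ _ Hs) as [e [He Hs']].
  exists e. split; [exact He|]. split; [|split].
  - exists (a + 2 * K * e). split; [exact Hs'|].
    destruct t; simpl in *. lra.
  - destruct t; simpl in *. lra.
  - rewrite (jdn_shift _ _ _ _ _ He), fq_flip. exact Hj.
Qed.

Lemma is_t_shift M K K' Q t : is_t M K K' Q t ->
  exists e, is_sign e /\ is_t M K K' (flipQ Q) (Cplus t (RtoC (2 * K * e))).
Proof.
  intros [Hp Hu].
  destruct (t_shift _ _ _ _ _ Hp) as [e [He Hp']].
  exists e. split; [exact He|]. split; [exact Hp'|].
  intros t'' H''.
  destruct (t_shift _ _ _ _ _ H'') as [e' [He' Hq]].
  rewrite flip_invol in Hq.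
  pose proof (Hu _ Hq) as Heq.
  destruct H'' as [[a'' [Hs'' Ha'']] _].
  destruct Hp' as [[a' [Hs' Ha']] _].
  pose proof (seg_fun _ _ _ _ Hs'' Hs') as Haa.
  destruct t as [x y]; destruct t'' as [x'' y''].
  simpl in *. injection Heq as E1 E2.
  apply injective_projections; simpl; lra.
Qed.

Lemma sign_mul a b : is_sign a -> is_sign b -> is_sign (a * b).
Proof. intros [-> | ->] [-> | ->]; unfold is_sign; [left|right|right|left]; ring. Qed.

Lemma sum4 a b c d : is_sign a -> is_sign b -> is_sign c -> is_sign d ->
  exists j : Z, a + b + c + d = 2 * IZR j.
Proof.
  intros ha hb hc hd.
  destruct (sign_Z _ ha) as [z1 E1].
  destruct (sign_Z _ hb) as [z2 E2].
  destruct (sign_Z _ hc) as [z3 E3].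
  destruct (sign_Z _ hd) as [z4 E4].
  exists (z1 + z2 + z3 + z4 - 2)%Z.
  rewrite minus_IZR, !plus_IZR. simpl. lra.
Qed.

Lemma lambda_shift M K K' z j : in_Lambda M K K' z ->
  in_Lambda M K K' (Cplus z (RtoC (4 * K * IZR j))).
Proof.
  unfold in_Lambda. intros [m [n H]].
  exists (m + j)%Z, n.
  destruct (Rlt_dec M 1); subst z; apply injective_projections; simpl;
    rewrite ?plus_IZR; ring.
Qed.

Lemma condC3_flip Q1 Q2 Q3 Q4 : condC3 Q1 Q2 Q3 Q4 ->
  condC3 (flipQ Q1) (flipQ Q2) (flipQ Q3) (flipQ Q4).
Proof.
  unfold condC3. cbv zeta. rewrite Mq_flip.
  intros [HM [HM1 [K [K' [HK [HK' [t1 [t2 [t3 [t4 [H1 [H2 [H3 [H4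
           [e1 [e2 [e3 [he1 [he2 [he3 HL]]]]]]]]]]]]]]]]]]]].
  split; [exact HM|]. split; [exact HM1|].
  exists K, K'. split; [exact HK|]. split; [exact HK'|].
  destruct (is_t_shift _ _ _ _ _ H1) as [d1 [hd1 G1]].
  destruct (is_t_shift _ _ _ _ _ H2) as [d2 [hd2 G2]].
  destruct (is_t_shift _ _ _ _ _ H3) as [d3 [hd3 G3]].
  destruct (is_t_shift _ _ _ _ _ H4) as [d4 [hd4 G4]].
  eexists _, _, _, _. split; [exact G1|]. split; [exact G2|].
  split; [exact G3|]. split; [exact G4|].
  exists e1, e2, e3. split; [exact he1|]. split; [exact he2|]. split; [exact he3|].
  destruct (sum4 _ _ _ _ hd1 (sign_mul _ _ he1 hd2) (sign_mul _ _ he2 hd3)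
              (sign_mul _ _ he3 hd4)) as [j Hj].
  pose proof (lambda_shift _ _ _ _ j HL) as HL'.
  match goal with |- in_Lambda _ _ _ ?z => replace z with
    (Cplus (Cplus (Cplus (Cplus t1 (Cmult (RtoC e1) t2)) (Cmult (RtoC e2) t3))
             (Cmult (RtoC e3) t4)) (RtoC (4 * K * IZR j))) end.
  - exact HL'.
  - set (J := IZR j) in *.
    replace J with ((d1 + e1 * d2 + e2 * d3 + e3 * d4) / 2) by lra.
    destruct t1, t2, t3, t4.
    apply injective_projections; simpl; field.
Qed.

Lemma condC3_iff Q1 Q2 Q3 Q4 : condC3 Q1 Q2 Q3 Q4 <->
  condC3 (flipQ Q1) (flipQ Q2) (flipQ Q3) (flipQ Q4).
Proof.
  split; [apply condC3_flip|].
  intros H. rewrite <- (flip_invol Q1), <- (flip_invol Q2),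
    <- (flip_invol Q3), <- (flip_invol Q4).
  apply condC3_flip, H.
Qed.

Theorem lemma3 (Q1 Q2 Q3 Q4 : quad) :
  angles_ok Q1 -> angles_ok Q2 -> angles_ok Q3 -> angles_ok Q4 ->
  (values_preserved Q1 /\ values_preserved Q2 /\
   values_preserved Q3 /\ values_preserved Q4) /\
  (condE Q1 Q2 Q3 Q4 <-> condE (flipQ Q1) (flipQ Q2) (flipQ Q3) (flipQ Q4)) /\
  (condC1 Q1 Q2 Q3 Q4 <-> condC1 (flipQ Q1) (flipQ Q2) (flipQ Q3) (flipQ Q4)) /\
  (condC2 Q1 Q2 Q3 Q4 <-> condC2 (flipQ Q1) (flipQ Q2) (flipQ Q3) (flipQ Q4)) /\
  (condC3 Q1 Q2 Q3 Q4 <-> condC3 (flipQ Q1) (flipQ Q2) (flipQ Q3) (flipQ Q4)).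
Proof.
  intros _ _ _ _.
  split; [repeat split; apply vp|].
  split.
  { unfold condE. rewrite (condE_one_iff Q1), (condE_one_iff Q2),
      (condE_one_iff Q3), (condE_one_iff Q4). tauto. }
  split.
  { unfold condC1. rewrite !Mq_flip. tauto. }
  split.
  { unfold condC2. rewrite !rq_flip, !sq_flip. tauto. }
  apply condC3_iff.
Qed.
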